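(* Let $t\ge 2$ be an integer, let $\mathcal A$ be an alphabet, and let $\mathfrak C_t$ be the simple 2-level network $([t,t+1],[t,t])$, with an adversary able to corrupt up to $t$ of the edges outgoing from the source. Then, for every positive integer $i$, the $i$-shot capacity of $\mathfrak C_t$ (in Scenario A.1 as well as in Scenario A.2) is \[C_i(\mathfrak C_t,\mathcal A,\mathbf A_{\mathfrak C_t})=1.\]
   Context: An alphabet is a finite set $\mathcal A$ with $|\mathcal A|\ge 2$. For positive integers $a_j,b_j$, the simple 2-level network $([a_1,\dots,a_n],[b_1,\dots,b_n])$ is the directed acyclic multigraph with a source $S$, intermediate nodes $V_1,\dots,V_n$, a single terminal $T$, exactly $a_j$ parallel edges from $S$ to $V_j$ and exactly $b_j$ parallel edges from $V_j$ to $T$, and no other edges. Each edge carries one symbol of $\mathcal A$. A network code is a family $\mathcal F=\{\mathcal F_{V_j}:\mathcal A^{a_j}\to\mathcal A^{b_j}\}_j$. In one use, the source sends $x\in\mathcal A^{a_1+\dots+a_n}$ on its outgoing edges (the set $\mathcal U_S$), the adversary may replace the symbols on up to $t$ edges of $\mathcal U_S$ by arbitrary symbols, each $V_j$ applies $\mathcal F_{V_j}$ to the symbols it receives and sends the result to $T$. The fan-out set $\Omega_{\mathcal F}(x)$ is the set of all vectors $T$ can receive. For $i$ uses with the same network code, the input is $(x^1,\dots,x^i)$ and: in Scenario A.1 the adversary fixes one set $W\subseteq\mathcal U_S$ with $|W|\le t$ and in each of the $i$ rounds may alter (arbitrarily, independently per round) only symbols on edges of $W$; in Scenario A.2 the adversary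 may choose a different set of at most $t$ edges in each round, so the fan-out set is $\Omega_{\mathcal F}(x^1)\times\dots\times\Omega_{\mathcal F}(x^i)$. A nonempty code $C\subseteq(\mathcal A^{a_1+\dots+a_n})^i$ is unambiguous if distinct codewords have disjoint fan-out sets. The $i$-shot capacity $C_i$ is the maximum of $\log_{|\mathcal A|}(|C|)/i$ over all network codes and unambiguous codes $C$. *)

(* Defs.v *)
From mathcomp Require Import all_boot.
From Stdlib Require Import Reals.
Set Implicit Arguments.
Unset Strict Implicit.
Unset Printing Implicit Defensive.

Inductive scenario := ScenarioA1 | ScenarioA2.

Section Network.
(* Alphabet A (finite), simple 2-level network ([a_1..a_n],[b_1..b_n]),
   adversary power t, number of uses i. *)
Variables (A : finType) (n : nat) (a b : 'I_n -> nat) (t i : nat).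

(* Edges outgoing from the source: the a_j parallel edges S -> V_j. *)
Definition edgeS : finType := {j : 'I_n & 'I_(a j)}.

Definition input : finType := {ffun edgeS -> A}.

Definition netcode : finType :=
  {dffun forall j : 'I_n, {ffun {ffun 'I_(a j) -> A} -> {ffun 'I_(b j) -> A}}}.

Definition output : finType := {dffun forall j : 'I_n, {ffun 'I_(b j) -> A}}.

Definition restr (x : input) (j : 'I_n) : {ffun 'I_(a j) -> A} :=
  [ffun k => x (Tagged (fun j => 'I_(a j)) k)].

Definition out (F : netcode) (x : input) : output :=
  [ffun j => F j (restr x j)].

Definition fanout (F : netcode) (x : input) (y : output) : bool :=
  [exists x' : input, (#|[set e | x e != x' e]| <= t) && (out F x' == y)].

Definition codeword : finType := {ffun 'I_i -> input}.
Definition received : finType := {ffun 'I_i -> output}.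

Definition fanout_multi (sc : scenario) (F : netcode) (X : codeword)
    (Y : received) : bool :=
  match sc with
  | ScenarioA1 =>
      (* one fixed set W of at most t source edges for all rounds *)
      [exists W : {set edgeS}, (#|W| <= t) &&
         [forall r : 'I_i, exists x' : input,
            [forall e, (e \notin W) ==> (x' e == X r e)] && (out F x' == Y r)]]
  | ScenarioA2 =>
      (* a possibly different set each round: product of fan-out sets *)
      [forall r : 'I_i, fanout F (X r) (Y r)]
  end.

Definition unambiguous (sc : scenario) (F : netcode) (C : {set codeword}) : bool :=
  (C != set0) &&
  [forall X in C, forall X' in C,
     (X != X') ==> ~~ [exists Y, fanout_multi sc F X Y && fanout_multi sc F X' Y]].

Definition max_code_size (sc : scenario) : nat :=
  \max_(F : netcode) \max_(C : {set codeword} | unambiguous sc F C) #|C|.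

Definition capacity (sc : scenario) : R :=
  Rdiv (ln (INR (max_code_size sc))) (Rmult (INR i) (ln (INR #|A|))).

End Network.

Definition Ct_a (t : nat) : 'I_2 -> nat := fun j => nth 0 [:: t; t.+1] j.
Definition Ct_b (t : nat) : 'I_2 -> nat := fun j => nth 0 [:: t; t] j.

(* Main.v *)
Require Import Defs.
From mathcomp Require Import all_boot zify.
From Stdlib Require Import Reals.
Set Implicit Arguments. Unset Strict Implicit. Unset Printing Implicit Defensive.
Definition o1 : 'I_2 := @Ordinal 2 1 isT.
Lemma card_split (a : 'I_2 -> nat) (P : pred (edgeS a)) :
  #|[set e | P e]| = #|[set k : 'I_(a ord0) | P (Tagged _ k)]|
                   + #|[set k : 'I_(a o1) | P (Tagged _ k)]|.
Proof.
rewrite -!sum1_card.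
have := @sig_big_dep _ _ addn 'I_2 (fun j => 'I_(a j)) xpredT
   (fun j k => P (Tagged (fun j => 'I_(a j)) k)) (fun j k => 1).
rewrite big_ord_recl big_ord_recr big_ord0 /= add0n => H.
have E : (\sum_(i in [set e | P e]) 1 = \sum_(p : edgeS a | P (Tagged (fun j : 'I_2 => 'I_(a j)) (tagged p))) 1)%N.
  by apply: eq_bigl => -[j k]; rewrite inE.
rewrite E -H; congr (_ + _).
- by apply: eq_bigl => k; rewrite inE.
- rewrite (_ : lift ord0 ord_max = o1) //; last exact: val_inj.
  by apply: eq_bigl => k; rewrite inE.
Qed.

Lemma fanout_of (A : finType) (n : nat) (a b : 'I_n -> nat) (t i : nat) sc
  (F : netcode A a b) (X Z : codeword A a i) (W : {set edgeS a}) :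
  #|W| <= t -> (forall r e, e \notin W -> Z r e = X r e) ->
  fanout_multi t sc F X [ffun r => out F (Z r)].
Proof.
move=> HW H; case: sc => /=.
- apply/existsP; exists W; rewrite HW /=; apply/forallP => r; apply/existsP.
  exists (Z r); rewrite ffunE eqxx andbT; apply/forallP => e; apply/implyP => he.
  by rewrite H.
- apply/forallP => r; apply/existsP; exists (Z r); rewrite ffunE eqxx andbT.
  apply: leq_trans HW; apply: subset_leq_card; apply/subsetP => e; rewrite inE.
  by apply: contraR => he; rewrite H.
Qed.

Section Upper.
Variables (A : finType) (t i : nat).
Local Notation a := (Ct_a t).
Local Notation b := (Ct_b t).
Definition e0 : edgeS a := Tagged (fun j => 'I_(a j)) (ord0 : 'I_(a o1)).
Definition W1 : {set edgeS a} := [set e | tag e == ord0].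
Definition W2 : {set edgeS a} := [set e | (tag e != ord0) && (e != e0)].

Lemma W1_card : #|W1| <= t.
Proof.
rewrite /W1 card_split.
have -> : [set k : 'I_(a o1) | tag (Tagged (fun j => 'I_(a j)) k) == ord0] = set0.
  by apply/setP => k; rewrite !inE.
rewrite cards0 addn0; apply: leq_trans (max_card _) _; by rewrite card_ord.
Qed.

Lemma W2_card : #|W2| <= t.
Proof.
rewrite /W2 card_split.
have -> : [set k : 'I_(a ord0) | (tag (Tagged (fun j => 'I_(a j)) k) != ord0) && (Tagged (fun j => 'I_(a j)) k != e0)] = set0.
  by apply/setP => k; rewrite !inE.
rewrite cards0 add0n.
have -> : [set k : 'I_(a o1) | (tag (Tagged (fun j => 'I_(a j)) k) != ord0) && (Tagged (fun j => 'I_(a j)) k != e0)] = [set~ (ord0 : 'I_(t.+1))].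
  apply/setP => k; rewrite !inE /= /e0; congr negb.
  by rewrite eq_Tagged.
by rewrite cardsC1 card_ord.
Qed.

Lemma upper sc (F : netcode A a b) (C : {set codeword A a i}) :
  unambiguous t sc F C -> #|C| <= expn #|A| i.
Proof.
case/andP => _ /forallP HC.
pose phi (X : codeword A a i) : {ffun 'I_i -> A} := [ffun r => X r e0].
have inj : {in C &, injective phi}.
  move=> X X' hX hX' Hphi; apply/eqP; apply/negPn/negP => neq.
  have := HC X; rewrite hX /= => /forallP /(_ X'); rewrite hX' /= neq /=.
  move/negP; apply; apply/existsP.
  pose Z := [ffun r => [ffun e => if e \in W1 then X' r e else X r e]] : codeword A a i.
  exists [ffun r => out F (Z r)]; apply/andP; split.
  - apply: (@fanout_of A 2 a b t i sc F X Z W1 (W1_card)).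
    move=> r e he; rewrite !ffunE; by rewrite (negbTE he).
  - apply: (@fanout_of A 2 a b t i sc F X' Z W2 (W2_card)).
    move=> r e he; rewrite !ffunE; case: ifP => // hw1.
    have He : e = e0.
      move: he; rewrite !inE; move: hw1; rewrite inE => ->; by rewrite negbK => /eqP.
    subst e; have := congr1 (fun f : {ffun 'I_i -> A} => f r) Hphi; rewrite /phi !ffunE; by move=> ->.

have <- := card_in_imset inj; apply: leq_trans (max_card _) _.
by rewrite card_ffun card_ord.
Qed.
End Upper.
Lemma card_compl (T : finType) (P : pred T) :
  #|[set x | P x]| + #|[set x | ~~ P x]| = #|T|.
Proof.
have -> : [set x | ~~ P x] = ~: [set x | P x] by apply/setP => x; rewrite !inE.
by rewrite cardsC.
Qed.

Lemma card_disj (T : finType) (P Q : pred T) :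
  (forall x, P x -> ~~ Q x) -> #|[set x | P x]| + #|[set x | Q x]| <= #|T|.
Proof.
move=> H; rewrite -cardsUI.
have -> : [set x | P x] :&: [set x | Q x] = set0.
  apply/setP => x; rewrite !inE; case Px: (P x) => //=; by apply/negbTE/H.
by rewrite cards0 addn0 max_card.
Qed.

Section Lower.
Variables (A : finType) (z0 z1 : A).
Hypothesis z01 : z0 != z1.

Definition cnt m (w : {ffun 'I_m -> A}) (x : A) := #|[set k | w k == x]|.
Definition pa m (w : {ffun 'I_m -> A}) : A := [arg max_(x > z0) cnt w x].
Definition kk m (w : {ffun 'I_m -> A}) := maxn (cnt w (pa w)) 2.
Definition other (x : A) := if x == z0 then z1 else z0.
Definition enc2 m m' (w : {ffun 'I_m -> A}) : {ffun 'I_m' -> A} :=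
  [ffun k => if (val k < (kk w).-1)%N then pa w else other (pa w)].

Lemma other_neq x : other x != x.
Proof. rewrite /other; case: (eqVneq x z0) => [->|]; by rewrite // eq_sym. Qed.

Lemma pa_max m (w : {ffun 'I_m -> A}) x : cnt w x <= cnt w (pa w).
Proof. rewrite /pa; case: arg_maxnP => //= y _ H; exact: H. Qed.

Lemma cnt_disj m (w : {ffun 'I_m -> A}) x y : x != y -> cnt w x + cnt w y <= m.
Proof.
move=> nxy; rewrite /cnt; have := card_disj (P := fun k => w k == x) (Q := fun k => w k == y).
rewrite card_ord; apply => k /eqP ->; by [].
Qed.

Lemma compat m (w w' : {ffun 'I_m -> A}) x y : 3 <= m ->
  pa w = pa w' -> kk w = kk w' -> x != y -> cnt w x + cnt w' y <= m.
Proof.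
move=> m3 Hp Hk nxy.
have h1 := pa_max w x. have h2 := pa_max w' y.
move: Hk; rewrite /kk -Hp => Hk; rewrite -Hp in h2.
set a := pa w in h1 h2 Hk *.
case: (eqVneq x a) => [ex|nxa]; case: (eqVneq y a) => [ey|nya].
- by rewrite ex ey eqxx in nxy.
- have := cnt_disj w' nya; rewrite ex in h1 *; lia.
- have := cnt_disj w nxa; rewrite ey in h2 *; lia.
- have := cnt_disj w nxa; have := cnt_disj w' nya; lia.
Qed.

Lemma kk_bounds m (w : {ffun 'I_m -> A}) : 2 <= m -> 2 <= kk w <= m.
Proof.
move=> m2; rewrite /kk; have : cnt w (pa w) <= m.
  by rewrite /cnt; apply: leq_trans (max_card _) _; rewrite card_ord.
lia.
Qed.

Lemma enc2_inj t (w w' : {ffun 'I_(t.+1) -> A}) : 1 <= t ->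
  enc2 t w = enc2 t w' -> pa w = pa w' /\ kk w = kk w'.
Proof.
move=> t1 E.
have := kk_bounds w; have := kk_bounds w'; move=> /(_ ltac:(lia)) B' /(_ ltac:(lia)) B.
have E0 := congr1 (fun f : {ffun 'I_t -> A} => f (Ordinal t1)) E.
move: E0; rewrite /= !ffunE /=.
have -> : (0 < (kk w).-1)%N by lia.
have -> : (0 < (kk w').-1)%N by lia.
move=> Hp; split => //.
have key : forall (v v' : {ffun 'I_(t.+1) -> A}), 2 <= kk v <= t.+1 -> 2 <= kk v' <= t.+1 ->
    pa v = pa v' -> enc2 t v = enc2 t v' -> ~ (kk v < kk v').
  move=> v v' Bv Bv' Hpv Ev lt.
  have lt1 : ((kk v).-1 < t)%N by lia.
  have := congr1 (fun f : {ffun 'I_t -> A} => f (Ordinal lt1)) Ev.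
  rewrite /= !ffunE /= ltnn.
  have -> : ((kk v).-1 < (kk v').-1)%N by lia.
  rewrite -Hpv => /eqP; by rewrite (negbTE (other_neq _)).
case: (ltngtP (kk w) (kk w')) => // lt.
- by case: (key w w').
- by case: (key w' w).
Qed.
End Lower.

Section Net.
Variables (A : finType) (z0 z1 : A).
Hypothesis z01 : z0 != z1.
Variable t : nat.
Hypothesis t2 : 2 <= t.
Local Notation a := (Ct_a t).
Local Notation b := (Ct_b t).

Definition G (j : 'I_2) : {ffun {ffun 'I_(a j) -> A} -> {ffun 'I_(b j) -> A}} :=
  [ffun w => if val j == 0 then [ffun k : 'I_(b j) => nth z0 (fgraph w) k]
             else enc2 z0 z1 (b j) w].

Definition Fnet : netcode A a b := finfun G.

Definition enc1 (x : A) : input A a := [ffun _ => x].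

Definition T0 (k : 'I_(a ord0)) : edgeS a := Tagged (fun j => 'I_(a j)) k.
Definition T1 (k : 'I_(a o1)) : edgeS a := Tagged (fun j => 'I_(a j)) k.

Lemma single (a1 a2 : A) Y : a1 != a2 ->
  fanout t Fnet (enc1 a1) Y -> fanout t Fnet (enc1 a2) Y -> False.
Proof.
move=> n12.
case/existsP => y /andP [Hy /eqP Ey]; case/existsP => y' /andP [Hy' /eqP Ey'].
have Eo : out Fnet y = out Fnet y' by rewrite Ey Ey'.
have E0 := congr1 (fun o : output A b => o ord0) Eo.
have E1 := congr1 (fun o : output A b => o o1) Eo.
rewrite /out !(@ffunE _ (fun j => {ffun 'I_(b j) -> A})) in E0 E1.
rewrite /Fnet !(@ffunE _ (fun j => {ffun {ffun 'I_(a j) -> A} -> {ffun 'I_(b j) -> A}})) /G !ffunE in E0 E1.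
rewrite (_ : (val (ord0 : 'I_2) == 0) = true) // in E0.
rewrite (_ : (val o1 == 0) = false) // in E1.
have hu : forall k : 'I_t, y (T0 k) = y' (T0 k).
  move=> k; have := congr1 (fun f : {ffun 'I_t -> A} => f k) E0.
  by rewrite !ffunE !(nth_fgraph_ord z0 k) !ffunE.
have [Hp Hk] := enc2_inj z01 (t:=t) (w:=restr y o1) (w':=restr y' o1) ltac:(lia) E1.
have Hc := compat z01 (m:=t.+1) (w:=restr y o1) (w':=restr y' o1) ltac:(lia) Hp Hk n12.
rewrite card_split in Hy; rewrite card_split in Hy'.
have c1 : #|[set k : 'I_(a ord0) | enc1 a1 (Tagged _ k) != y (Tagged _ k)]| = #|[set k : 'I_t | ~~ (y (T0 k) == a1)]|.
  by apply: eq_card => k; rewrite !inE ffunE eq_sym.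
have c2 : #|[set k : 'I_(a o1) | enc1 a1 (Tagged _ k) != y (Tagged _ k)]| = #|[set k : 'I_(t.+1) | ~~ (y (T1 k) == a1)]|.
  by apply: eq_card => k; rewrite !inE ffunE eq_sym.
have c3 : #|[set k : 'I_(a ord0) | enc1 a2 (Tagged _ k) != y' (Tagged _ k)]| = #|[set k : 'I_t | ~~ (y (T0 k) == a2)]|.
  by apply: eq_card => k; rewrite !inE ffunE eq_sym hu.
have c4 : #|[set k : 'I_(a o1) | enc1 a2 (Tagged _ k) != y' (Tagged _ k)]| = #|[set k : 'I_(t.+1) | ~~ (y' (T1 k) == a2)]|.
  by apply: eq_card => k; rewrite !inE ffunE eq_sym.
have d1 : cnt (restr y o1) a1 = #|[set k : 'I_(t.+1) | y (T1 k) == a1]|.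
  by apply: eq_card => k; rewrite !inE ffunE.
have d2 : cnt (restr y' o1) a2 = #|[set k : 'I_(t.+1) | y' (T1 k) == a2]|.
  by apply: eq_card => k; rewrite !inE ffunE.
have f1 := card_compl (fun k : 'I_t => y (T0 k) == a1).
have f2 := card_compl (fun k : 'I_t => y (T0 k) == a2).
have f3 := card_compl (fun k : 'I_(t.+1) => y (T1 k) == a1).
have f4 := card_compl (fun k : 'I_(t.+1) => y' (T1 k) == a2).
have g := card_disj (P := fun k : 'I_t => y (T0 k) == a1) (Q := fun k : 'I_t => y (T0 k) == a2).
have /g {}g : forall k : 'I_t, y (T0 k) == a1 -> ~~ (y (T0 k) == a2).
  by move=> k /eqP ->.
rewrite card_ord in f1; rewrite card_ord in f2; rewrite card_ord in f3; rewrite card_ord in f4; rewrite card_ord in g.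
rewrite c1 c2 in Hy; rewrite c3 c4 in Hy'; rewrite d1 d2 in Hc.
set p1 := #|[set k : 'I_t | y (T0 k) == a1]| in f1 g.
set p2 := #|[set k : 'I_t | y (T0 k) == a2]| in f2 g.
set q1 := #|[set k : 'I_t | y (T0 k) != a1]| in f1 Hy.
set q2 := #|[set k : 'I_t | y (T0 k) != a2]| in f2 Hy'.
set r1 := #|[set k : 'I_(t.+1) | y (T1 k) == a1]| in f3 Hc.
set r2 := #|[set k : 'I_(t.+1) | y' (T1 k) == a2]| in f4 Hc.
set s1 := #|[set k : 'I_(t.+1) | y (T1 k) != a1]| in f3 Hy.
set s2 := #|[set k : 'I_(t.+1) | y' (T1 k) != a2]| in f4 Hy'.
lia.
Qed.

Lemma multi_to_single (n : nat) (aa bb : 'I_n -> nat) (i : nat) sc (F : netcode A aa bb)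
   (X : codeword A aa i) Y r :
  fanout_multi t sc F X Y -> fanout t F (X r) (Y r).
Proof.
case: sc => /=.
- case/existsP => W /andP [HW /forallP /(_ r) /existsP [x' /andP [Hx Ho]]].
  apply/existsP; exists x'; rewrite Ho andbT; apply: leq_trans HW.
  apply: subset_leq_card; apply/subsetP => e; rewrite inE; apply: contraR => he.
  by move/forallP: Hx => /(_ e); rewrite he /= eq_sym.
- by move/forallP.
Qed.

Variable i : nat.
Definition cw (m : {ffun 'I_i -> A}) : codeword A a i := [ffun r => enc1 (m r)].
Definition Ccode : {set codeword A a i} := [set cw m | m : {ffun 'I_i -> A}].

Lemma Ccode_card : #|Ccode| = expn #|A| i.
Proof.
rewrite card_imset ?card_ffun ?card_ord // => m m' E; apply/ffunP => r.
have := congr1 (fun X : codeword A a i => X r (T0 (Ordinal (ltnW t2)))) E.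
by rewrite /cw !ffunE.
Qed.

Lemma Ccode_unamb sc : unambiguous t sc Fnet Ccode.
Proof.
apply/andP; split.
  apply/set0Pn; exists (cw [ffun _ => z0]); exact: imset_f.
apply/forallP => X; apply/implyP => /imsetP [m _ ->].
apply/forallP => X'; apply/implyP => /imsetP [m' _ ->].
apply/implyP => neq; apply/negP => /existsP [Y /andP [H1 H2]].
have [r nr] : exists r, m r != m' r.
  apply/existsP; apply: contraR neq => /existsPn H.
  apply/eqP; congr cw; apply/ffunP => r; exact/eqP/negPn/H.
apply: (single nr (Y := Y r)).
- by have := multi_to_single r H1; rewrite /cw ffunE.
- by have := multi_to_single r H2; rewrite /cw ffunE.
Qed.
End Net.

Lemma INR_expn (q i : nat) : INR (expn q i) = (INR q ^ i)%R.
Proof.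
elim: i => [|i IH]; first by rewrite expn0.
by rewrite expnS mulnE mult_INR IH.
Qed.

Lemma max_size (A : finType) (t i : nat) (sc : scenario) :
  1 < #|A| -> 2 <= t ->
  max_code_size A (Ct_a t) (Ct_b t) t i sc = expn #|A| i.
Proof.
move=> /card_gt1P [z0 [z1 [_ _ z01]]] t2.
rewrite /max_code_size; apply/eqP; rewrite eqn_leq; apply/andP; split.
- apply/bigmax_leqP => F _; apply/bigmax_leqP => C HC; exact: upper HC.
- have H1 := leq_bigmax_cond (P := fun C => unambiguous t sc (Fnet z0 z1 t) C)
     (F := fun C => #|C|) (Ccode A t i) (@Ccode_unamb A z0 z1 z01 t t2 i sc).
  have H2 := @leq_bigmax _ (fun F => \max_(C | unambiguous t sc F C) #|C|) (Fnet z0 z1 t).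
  rewrite -(@Ccode_card A t t2 i).
  exact: leq_trans H1 (H2 i).
Qed.

Theorem proposition4p5 (A : finType) (t i : nat) (sc : scenario) :
  1 < #|A| -> 2 <= t -> 0 < i ->
  capacity A (Ct_a t) (Ct_b t) t i sc = R1.
Proof.
move=> hA ht hi.
rewrite /capacity max_size // INR_expn.
have q1 : (1 < INR #|A|)%R by apply: (lt_INR 1); apply/ltP.
have q0 : (0 < INR #|A|)%R by apply: Rlt_trans q1; exact: Rlt_0_1.
rewrite ln_pow //.
have l0 : (0 < ln (INR #|A|))%R by rewrite -ln_1; apply: ln_increasing => //; exact: Rlt_0_1.
have i0 : INR i <> 0%R by apply: not_0_INR => E; rewrite E in hi.
unfold Rdiv; rewrite Rinv_r //.
apply: Rmult_integral_contrapositive_currified => //.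
by apply: Rgt_not_eq.
Qed.
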